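(* Let a function $K^\varepsilon$ be of order $\zeta \leq 0$. Then for every $\kappa \in [0,1]$, $t \in \mathbf{R}$ and $x_1, x_2 \in \Lambda_\varepsilon^d$ one has \begin{equ} |K^\varepsilon(t, x_1) - K^\varepsilon(t, x_2)| \lesssim |x_1 - x_2|^\kappa \Bigl((\|(t, x_1)\|_{\mathfrak{s}}\vee\varepsilon)^{\zeta - \kappa} + (\|(t, x_2)\|_{\mathfrak{s}}\vee\varepsilon)^{\zeta - \kappa} \Bigr) |\!|\!| K^\varepsilon |\!|\!|_{\zeta; 1}\;. \end{equ}
   Context: Fix a scaling $\mathfrak{s}=(\mathfrak{s}_0,1,\ldots,1)$ of $\mathbf{R}^{d+1}$ with $\mathfrak{s}_0\ge1$, and $\varepsilon=2^{-N}$, $N\in\mathbf{N}$, with grid $\Lambda^d_\varepsilon=(\varepsilon\mathbf{Z})^d$. For $z=(t,x)$ let $\|z\|_{\mathfrak{s}}=|t|^{1/\mathfrak{s}_0}\vee|x|$. Functions $K^\varepsilon$ on $\mathbf{R}\times\Lambda^d_\varepsilon$ are supported in a ball centered at the origin and may fail to be differentiable in time only on $P_0=\{(0,x):x\in\Lambda^d_\varepsilon\}$. Let $D_{i,\varepsilon}K(t,x)=\varepsilon^{-1}(K(t,x+\varepsilon e_i)-K(t,x))$, $D^k_\varepsilon=D_t^{k_0}D^{k_1}_{1,\varepsilon}\cdots D^{k_d}_{d,\varepsilon}$, $|k|_{\mathfrak{s}}=\mathfrak{s}_0k_0+\sum_{i\ge1}k_i$, and $|\!|\!| K^\varepsilon|\!|\!|_{\zeta;m}=\max_{|k|_{\mathfrak{s}}\le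 m}\sup_{z\notin P_0}\frac{|D^k_\varepsilon K^\varepsilon(z)|}{(\|z\|_{\mathfrak{s}}\vee\varepsilon)^{(\zeta-|k|_{\mathfrak{s}})\wedge0}}$. $K^\varepsilon$ (a sequence indexed by $\varepsilon=2^{-N}$) is of order $\zeta$ if this quantity is bounded uniformly in $\varepsilon$; the proportionality constant is independent of $\varepsilon$. *)

(* Defs.v *)
From HB Require Import structures.
From mathcomp Require Import all_boot all_order all_algebra.
From mathcomp Require Import all_classical all_reals all_analysis.
Set Implicit Arguments. Unset Strict Implicit. Unset Printing Implicit Defensive.
Import Order.TTheory GRing.Theory Num.Theory.
Import numFieldNormedType.Exports.
Local Open Scope classical_set_scope.
Local Open Scope ring_scope.

(* Functions on R x Lambda^d_eps are represented as  K : R -> ('I_d -> int) -> R,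
   where the grid point  x in (eps Z)^d  is encoded by its integer coordinates
   k : 'I_d -> int  (x = eps * k). *)

Section Defs.
Variable R : realType.

Definition epsN (N : nat) : R := 2%:R ^- N.

Definition gridnorm d (eps : R) (k : 'I_d -> int) : R :=
  Num.sqrt (\sum_(i < d) (eps * (k i)%:~R) ^+ 2).

Definition snorm d (s0 : R) (eps : R) (t : R) (k : 'I_d -> int) : R :=
  Num.max (`|t| `^ (s0^-1)) (gridnorm eps k).

Definition Ddiff d (eps : R) (i : 'I_d) (K : R -> ('I_d -> int) -> R)
  : R -> ('I_d -> int) -> R :=
  fun t k => eps^-1 * (K t (fun j => k j + (j == i)%:Z) - K t k).

Definition Dtime d (K : R -> ('I_d -> int) -> R) : R -> ('I_d -> int) -> R :=
  fun t k => derive1 (fun s => K s k) t.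

Definition Dk d (eps : R) (k0 : nat) (kx : 'I_d -> nat)
  (K : R -> ('I_d -> int) -> R) : R -> ('I_d -> int) -> R :=
  iter k0 (@Dtime d)
    (foldr (fun i g => iter (kx i) (Ddiff eps i) g) K (enum 'I_d)).

Definition msize d (s0 : R) (k0 : nat) (kx : 'I_d -> nat) : R :=
  s0 * k0%:R + \sum_(i < d) (kx i)%:R.

Definition tnorm d (s0 eps zeta m : R) (K : R -> ('I_d -> int) -> R) : \bar R :=
  ereal_sup [set v : \bar R | exists k0 kx t k,
    [/\ t != 0, msize s0 k0 kx <= m &
        v = (`|Dk eps k0 kx K t k|
             / (Num.max (snorm s0 eps t k) eps) `^ (Num.min (zeta - msize s0 k0 kx) 0))%:E]].

Definition admissible d (s0 eps : R) (K : R -> ('I_d -> int) -> R) : Prop :=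
  [/\ (exists r : R, forall t k, r < snorm s0 eps t k -> K t k = 0),
      (forall t k, t != 0 -> derivable (fun s => K s k) t 1) &
      (forall k, K t k @[t --> 0^'+] --> K 0 k) \/
      (forall k, K t k @[t --> 0^'-] --> K 0 k)].

Definition of_order d (s0 zeta m : R) (K : nat -> R -> ('I_d -> int) -> R) : Prop :=
  exists M : R, forall N, (tnorm s0 (epsN N) zeta m (K N) <= M%:E)%E.

End Defs.
Arguments epsN {R}.

(* Main.v *)
Require Import Defs.
From HB Require Import structures.
From mathcomp Require Import all_boot all_order all_algebra.
From mathcomp Require Import all_classical all_reals all_analysis.
From mathcomp Require Import ring lra zify.

Import Order.TTheory GRing.Theory Num.Theory.
Import numFieldNormedType.Exports.
Local Open Scope classical_set_scope.
Local Open Scope ring_scope.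

Section Aux.
Variable R : realType.

Lemma sqrt_sum_le (n : nat) (f : 'I_n -> R) :
  Num.sqrt (\sum_(i < n) f i ^+ 2) <= \sum_(i < n) `|f i|.
Proof.
have H : forall m (g : 'I_m -> R), \sum_(i < m) g i ^+ 2 <= (\sum_(i < m) `|g i|) ^+ 2.
  elim=> [|m IH] g; first by rewrite !big_ord0 expr0n.
  rewrite !big_ord_recr /=.
  have := IH (fun i => g (widen_ord (leqnSn m) i)).
  have : 0 <= \sum_(i < m) `|g (widen_ord (leqnSn m) i)| by apply: sumr_ge0.
  set S := \sum_(i < m) _; set Q := \sum_(i < m) _.
  have := normr_ge0 (g ord_max); rewrite -[g ord_max ^+ 2]real_normK ?num_real //.
  move=> h1 h2 h3; nra.
apply: le_trans (ler_wsqrtr (H _ f)) _.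
by rewrite sqrtr_sqr ger0_norm // sumr_ge0.
Qed.

Lemma coord_le (d : nat) (eps : R) (x : 'I_d -> int) (i : 'I_d) :
  `|eps * (x i)%:~R| <= gridnorm eps x.
Proof.
rewrite /gridnorm -sqrtr_sqr ler_wsqrtr // (bigD1 i) //= lerDl.
by apply: sumr_ge0 => j _; exact: sqr_ge0.
Qed.

Lemma gridnorm_ge0 (d : nat) (eps : R) (x : 'I_d -> int) : 0 <= gridnorm eps x.
Proof. exact: sqrtr_ge0. Qed.

Definition rr (d : nat) (eps a : R) (x : 'I_d -> int) :=
  Num.max (Num.max a (gridnorm eps x)) eps.

Lemma rr_ge (d : nat) (eps a : R) x : eps <= rr d eps a x.
Proof. by rewrite /rr le_max lexx orbT. Qed.

Lemma rr_low (d : nat) (eps a D : R) (x z : 'I_d -> int) :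
  (0 < d)%N -> 0 <= a -> 0 < eps -> 0 <= D ->
  (forall i, `|eps * (x i - z i)%:~R| <= D) ->
  rr d eps a x <= d%:R * (rr d eps a z + D).
Proof.
move=> d0 a0 e0 D0 H.
have d1 : 1 <= (d%:R : R) by rewrite ler1n.
have rz0 : 0 <= rr d eps a z by apply: le_trans (rr_ge _ _ _ _); exact: ltW.
have key : forall y, y <= rr d eps a z -> y <= d%:R * (rr d eps a z + D).
  move=> y hy; apply: (le_trans hy); nra.
rewrite /rr !ge_max; apply/andP; split; [apply/andP; split|].
- by apply: key; rewrite /rr !le_max lexx.
- rewrite {1}/gridnorm.
  have := sqrt_sum_le _ (fun i => eps * (x i)%:~R) => /le_trans; apply.
  apply: (@le_trans _ _ (\sum_(i < d) (gridnorm eps z + D))).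
    apply: ler_sum => i _.
    have -> : eps * (x i)%:~R = eps * (z i)%:~R + eps * (x i - z i)%:~R.
      by rewrite intrD intrN; ring.
    apply: (le_trans (ler_normD _ _)); apply: lerD; [exact: coord_le| exact: H].
  rewrite sumr_const card_ord -[(_ + D) *+ d]mulr_natl ler_wpM2l ?ler0n // lerD2r.
  by rewrite /rr !le_max lexx orbT.
- by apply: key; exact: rr_ge.
Qed.

End Aux.
Section Path.
Variable R : realType.
Variable d : nat.
Variable f : ('I_d -> int) -> R.
Variables x1 x2 : 'I_d -> int.

Definition betw (z : 'I_d -> int) :=
  forall i, ((x1 i <= z i <= x2 i) || (x2 i <= z i <= x1 i))%R.
Definition incr (z : 'I_d -> int) (i : 'I_d) := fun j => z j + (j == i)%:Z.

Lemma path_bound (M : R) :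
  (forall z i, betw z -> betw (incr z i) -> `|f (incr z i) - f z| <= M) ->
  forall n y, betw y -> (\sum_(i < d) `|y i - x2 i|%N)%N = n ->
  `|f y - f x2| <= n%:R * M.
Proof.
move=> Hs; elim=> [|n IH] y By Hn.
  have -> : y = x2.
    apply: boolp.funext => i; move: Hn => /eqP; rewrite sum_nat_eq0 => /forallP /(_ i).
    by move=> /implyP /(_ isT); lia.
  by rewrite subrr normr0 mul0r.
have [i Hi] : exists i, y i != x2 i.
  apply: boolp.contrapT => Hc; move: Hn; suff -> : (\sum_(i < d) `|y i - x2 i|%N)%N = 0%N by [].
  apply: big1 => i _; case: (eqVneq (y i) (x2 i)) => [->|h]; first by rewrite subrr.
  by exfalso; apply: Hc; exists i.
have By' := By i.
have [lt|gt] : (y i < x2 i)%R \/ (x2 i < y i)%R by move: Hi; lia.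
- pose y' := incr y i.
  have B' : betw y'.
    move=> j; rewrite /y' /incr; case: eqP => [->|_]; last by rewrite addr0; exact: By.
    by move: By' lt; lia.
  have S' : (\sum_(j < d) `|y' j - x2 j|%N)%N = n.
    rewrite (bigD1 i) //=; move: Hn; rewrite (bigD1 i) //=.
    have -> : (\sum_(j < d | j != i) `|y' j - x2 j|%N = \sum_(j < d | j != i) `|y j - x2 j|%N)%N.
      by apply: eq_bigr => j /negPf ji; rewrite /y' /incr ji addr0.
    rewrite /y' /incr eqxx /=; move: lt; set S := (\sum_(j < d | j != i) _)%N; lia.
  have := IH y' B' S'; have := Hs y i By B'.
  rewrite -/y' => h1 h2.
  have -> : f y - f x2 = - (f y' - f y) + (f y' - f x2) by ring.
  apply: (le_trans (ler_normD _ _)); rewrite normrN mulrSr mulrDl mul1r addrC.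
  exact: lerD.
- pose y' := fun j => y j - (j == i)%:Z.
  have Ey : incr y' i = y by apply: boolp.funext => j; rewrite /incr /y'; lia.
  have B' : betw y'.
    move=> j; rewrite /y'; case: eqP => [->|_]; last by rewrite subr0; exact: By.
    by move: By' gt; lia.
  have S' : (\sum_(j < d) `|y' j - x2 j|%N)%N = n.
    rewrite (bigD1 i) //=; move: Hn; rewrite (bigD1 i) //=.
    have -> : (\sum_(j < d | j != i) `|y' j - x2 j|%N = \sum_(j < d | j != i) `|y j - x2 j|%N)%N.
      by apply: eq_bigr => j /negPf ji; rewrite /y' ji subr0.
    rewrite /y' eqxx /=; move: gt; set S := (\sum_(j < d | j != i) _)%N; lia.
  have := IH y' B' S'; have := Hs y' i B'; rewrite Ey => /(_ By) h1 h2.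
  have -> : f y - f x2 = (f y - f y') + (f y' - f x2) by ring.
  apply: (le_trans (ler_normD _ _)); rewrite mulrSr mulrDl mul1r addrC.
  exact: lerD.
Qed.

End Path.
Section P.
Variable R : realType.
Lemma powR_split (r p q : R) : 0 < r -> r `^ (p + q) = r `^ p * r `^ q.
Proof. by move=> r0; rewrite powRD //; apply/implyP => _; rewrite gt_eqF. Qed.

Lemma powR_mono (b r p : R) : 0 <= b -> b <= r -> 0 <= p -> b `^ p <= r `^ p.
Proof.
move=> b0 br p0; apply: (ge0_ler_powR p0) => //; rewrite nnegrE //.
exact: le_trans br.
Qed.

Lemma powR_anti (b r p : R) : 0 < b -> b <= r -> p <= 0 -> r `^ p <= b `^ p.
Proof.
move=> b0 br p0; have r0 : 0 < r by exact: lt_le_trans br.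
rewrite -[p]opprK (powRN r (- p)) (powRN b (- p)).
have h : b `^ (- p) <= r `^ (- p) by apply: powR_mono; rewrite ?oppr_ge0 // ltW.
by rewrite lef_pV2 // posrE powR_gt0.
Qed.

Lemma int_abs_le (eps : R) (p q : int) : 0 <= eps -> (`|p| <= `|q|)%R ->
  `|eps * p%:~R| <= `|eps * q%:~R|.
Proof.
move=> e0 h; rewrite !normrM ler_wpM2l //; rewrite -!intr_norm ler_int //.
Qed.
End P.
Arguments rr {R}. Arguments rr_ge {R d}. Arguments rr_low {R d}. Arguments coord_le {R d}.
Arguments gridnorm_ge0 {R d}. Arguments sqrt_sum_le {R}. Arguments path_bound {R d}.
Arguments powR_split {R}. Arguments powR_mono {R}. Arguments powR_anti {R}.
Arguments int_abs_le {R}.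
Arguments incr {d}. Arguments betw {d}.
Section Core.
Variable R : realType.

Definition Cst (d : nat) (zeta kappa : R) : R :=
  1 + (2 * d%:R ^+ 2 + 2 * d%:R) `^ kappa + d%:R * ((2 * d%:R)^-1) `^ (zeta - 1).

Lemma betw_abs (p q w : int) : ((p <= w <= q) || (q <= w <= p)) -> `|p - w| <= `|p - q|.
Proof. lia. Qed.

Lemma betw_refl (p q : int) : (p <= p <= q) || (q <= p <= p).
Proof. lia. Qed.

Lemma Cst_ge1 d zeta kappa : 1 <= Cst d zeta kappa.
Proof.
rewrite /Cst -addrA lerDl addr_ge0 ?powR_ge0 // mulr_ge0 ?ler0n ?powR_ge0 //.
Qed.

Lemma core (d : nat) (eps zeta kappa T a : R) (f : ('I_d -> int) -> R) :
  (0 < d)%N -> 0 < eps -> zeta <= 0 -> 0 <= kappa <= 1 -> 0 <= T -> 0 <= a ->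
  (forall x, `|f x| <= T * rr d eps a x `^ zeta) ->
  (forall x i, `|f (incr x i) - f x| <= eps * (T * rr d eps a x `^ (zeta - 1))) ->
  forall x1 x2, `|f x1 - f x2| <=
    Cst d zeta kappa * gridnorm eps (fun i => x1 i - x2 i) `^ kappa *
    (rr d eps a x1 `^ (zeta - kappa) + rr d eps a x2 `^ (zeta - kappa)) * T.
Proof.
move=> d0 e0 z0 /andP[k0 k1] T0 a0 H0 H1 x1 x2.
set δ := gridnorm eps (fun i => x1 i - x2 i).
have δ0 : 0 <= δ by exact: gridnorm_ge0.
set r1 := rr d eps a x1; set r2 := rr d eps a x2.
have r1p : 0 < r1 by exact: lt_le_trans e0 (rr_ge _ _ _).
have r2p : 0 < r2 by exact: lt_le_trans e0 (rr_ge _ _ _).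
have d1 : 1 <= (d%:R : R) by rewrite ler1n.
have Hc1 : forall i, `|eps * (x1 i - x2 i)%:~R| <= δ.
  by move=> i; exact: (coord_le eps (fun i => x1 i - x2 i) i).
have Hc2 : forall i, `|eps * (x2 i - x1 i)%:~R| <= δ.
  by move=> i; rewrite -opprB intrN mulrN normrN.
set u1 := r1 `^ (zeta - kappa); set u2 := r2 `^ (zeta - kappa).
set A := δ `^ kappa.
have u10 : 0 <= u1 by exact: powR_ge0.
have u20 : 0 <= u2 by exact: powR_ge0.
have A0 : 0 <= A by exact: powR_ge0.
have Cge := Cst_ge1 d zeta kappa.
case: (lerP r1 (2 * d%:R * δ)) => hA.
- pose c : R := 2 * d%:R ^+ 2 + 2 * d%:R.
  have c0 : 0 <= c by rewrite /c; nra.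
  have r2b : r2 <= d%:R * (r1 + δ) by apply: rr_low => //; exact: ltW.
  have cr1 : r1 <= c * δ by rewrite /c; nra.
  have cr2 : r2 <= c * δ by rewrite /c; nra.
  have bnd : forall r, 0 < r -> r <= c * δ ->
      r `^ zeta <= r `^ (zeta - kappa) * (c `^ kappa * A).
    move=> r rp rc.
    have -> : r `^ zeta = r `^ (zeta - kappa) * r `^ kappa by rewrite -powR_split // subrK.
    rewrite ler_wpM2l ?powR_ge0 // /A -powRM //.
    by apply: powR_mono => //; exact: ltW.
  have f1 : `|f x1| <= T * (u1 * (c `^ kappa * A)).
    exact: le_trans (H0 x1) (ler_wpM2l T0 (bnd _ r1p cr1)).
  have f2 : `|f x2| <= T * (u2 * (c `^ kappa * A)).
    exact: le_trans (H0 x2) (ler_wpM2l T0 (bnd _ r2p cr2)).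
  have cK : c `^ kappa <= Cst d zeta kappa.
    rewrite /Cst -/c; have := mulr_ge0 (ler0n R d) (powR_ge0 ((2 * d%:R)^-1) (zeta - 1)); lra.
  apply: le_trans (ler_normB _ _) _; apply: le_trans (lerD f1 f2) _.
  have -> : T * (u1 * (c `^ kappa * A)) + T * (u2 * (c `^ kappa * A)) =
    c `^ kappa * (A * (u1 + u2) * T) by ring.
  have -> : Cst d zeta kappa * A * (u1 + u2) * T =
    Cst d zeta kappa * (A * (u1 + u2) * T) by ring.
  by apply: ler_wpM2r => //; rewrite !mulr_ge0 // addr_ge0.
- have b0 : 0 < r1 / (2 * d%:R).
    by apply: divr_gt0 => //; rewrite mulr_gt0 // ltr0n.
  set b := r1 / (2 * d%:R).
  have betw_lb : forall z, betw x1 x2 z -> b <= rr d eps a z.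
    move=> z Bz.
    have hz : forall i, `|eps * (x1 i - z i)%:~R| <= δ.
      move=> i; apply: le_trans (Hc1 i); apply: int_abs_le; first exact: ltW.
      exact: betw_abs (Bz i).
    have := rr_low eps a δ x1 z d0 a0 e0 δ0 hz; rewrite -/r1 => h.
    rewrite /b ler_pdivrMr; last by rewrite mulr_gt0 // ltr0n.
    move: h hA; rewrite mulrDr.
    have -> : rr d eps a z * (2 * d%:R) = 2 * (d%:R * rr d eps a z) by ring.
    rewrite -mulrA; lra.
  pose M := eps * (T * b `^ (zeta - 1)).
  have Hs : forall z i, betw x1 x2 z -> betw x1 x2 (incr z i) ->
      `|f (incr z i) - f z| <= M.
    move=> z i Bz _; apply: le_trans (H1 z i) _.
    rewrite /M ler_wpM2l ?ler_wpM2l //; first exact: ltW.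
    apply: powR_anti => //; first exact: betw_lb.
    lra.
  pose n := (\sum_(i < d) absz (x1 i - x2 i)%R)%N.
  have Bx1 : betw x1 x2 x1 by move=> i; exact: betw_refl.
  have Hp := path_bound f x1 x2 M Hs n x1 Bx1 erefl.
  have nE : n%:R * eps <= d%:R * δ.
    rewrite /n natr_sum mulr_suml.
    apply: (@le_trans _ _ (\sum_(i < d) δ)).
      apply: ler_sum => i _; apply: le_trans (Hc1 i).
      by rewrite natr_absz intr_norm normrM (gtr0_norm e0) mulrC.
    by rewrite sumr_const card_ord mulr_natl.
  pose W := b `^ (zeta - 1).
  pose K' := ((2 * d%:R)^-1) `^ (zeta - 1).
  pose V := r1 `^ (zeta - 1).
  pose Dk := δ `^ (1 - kappa).
  pose Rk := r1 `^ (1 - kappa).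
  have W0 : 0 <= W by exact: powR_ge0.
  have K'0 : 0 <= K' by exact: powR_ge0.
  have V0 : 0 <= V by exact: powR_ge0.
  have WE : W = V * K'.
    have h1 : 0 <= r1 by exact: ltW.
    have h2 : 0 <= (2 * d%:R : R)^-1 by rewrite invr_ge0 mulr_ge0 // ler0n.
    by rewrite /W /V /K' /b -powRM.
  have δE : δ = A * Dk.
    rewrite /A /Dk -powRD; last by rewrite addrC subrK oner_eq0.
    by rewrite addrC subrK powRr1.
  have δr1 : δ <= r1.
    have : δ <= d%:R * δ by rewrite ler_peMl.
    move: hA; rewrite -mulrA; lra.
  have DkR : Dk <= Rk by apply: powR_mono => //; lra.
  have RkV : Rk * V = u1.
    by rewrite /Rk /V /u1 -powR_split //; congr (_ `^ _); ring.
  have s1 : `|f x1 - f x2| <= (n%:R * eps) * (T * W).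
    by apply: le_trans Hp _; rewrite /M /W mulrA.
  have s2 : (n%:R * eps) * (T * W) <= (d%:R * δ) * (T * W).
    by apply: ler_wpM2r => //; exact: mulr_ge0.
  have s3 : (d%:R * δ) * (T * W) = (d%:R * K') * (A * (Dk * V)) * T.
    by rewrite WE δE; ring.
  have s4 : (d%:R * K') * (A * (Dk * V)) * T <= (d%:R * K') * (A * u1) * T.
    apply: ler_wpM2r => //; apply: ler_wpM2l; first by rewrite mulr_ge0 ?ler0n.
    by apply: ler_wpM2l => //; rewrite -RkV; apply: ler_wpM2r.
  have cK : d%:R * K' <= Cst d zeta kappa.
    rewrite /Cst -/K'; have := powR_ge0 (2 * d%:R ^+ 2 + 2 * d%:R) kappa; lra.
  have s5 : (d%:R * K') * (A * u1) * T <= Cst d zeta kappa * A * (u1 + u2) * T.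
    apply: ler_wpM2r => //; rewrite -[Cst d zeta kappa * A * _]mulrA; apply: ler_pM.
    - by rewrite mulr_ge0 ?ler0n.
    - exact: mulr_ge0.
    - exact: cK.
    - by apply: ler_wpM2l => //; lra.
  by apply: le_trans s1 _; apply: le_trans s2 _; rewrite s3; apply: le_trans s4 s5.
Qed.
End Core.
Arguments Cst {R}. Arguments core {R d}.
Section Main.
Variable R : realType.

Lemma Dk0 d (eps : R) K : Dk eps 0 (fun _ : 'I_d => 0%N) K = K.
Proof. by rewrite /Dk /=; elim: (enum 'I_d) => //= i s ->. Qed.

Lemma Dk1 d (eps : R) K (i : 'I_d) :
  Dk eps 0 (fun j => nat_of_bool (j == i)) K = Ddiff eps i K.
Proof.
rewrite /Dk /=.
have H : forall s : seq 'I_d, uniq s ->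
  foldr (fun j g => iter (nat_of_bool (j == i)) (Ddiff eps j) g) K s =
  if i \in s then Ddiff eps i K else K.
  elim=> //= j s IH /andP[js us]; rewrite in_cons IH //.
  move: js; case: (eqVneq j i) => [-> | ji] js /=.
    by rewrite (negPf js).
  by [].
by rewrite H ?enum_uniq // mem_enum.
Qed.

Lemma lim_le (F : set_system R) (PF : ProperFilter F) (h : R -> R) l B :
  h t @[t --> F] --> l -> (\forall t \near F, h t <= B) -> l <= B.
Proof.
move=> hl hB; rewrite -(cvg_lim _ hl) //; apply: limr_le => //.
by apply/cvg_ex; exists l.
Qed.

Lemma max_small (a a' g eps : R) : a <= eps -> a' <= eps ->
  Num.max (Num.max a g) eps = Num.max (Num.max a' g) eps.
Proof.
move=> ha ha'; rewrite -!maxA !(@max_r _ _ _ (Num.max g eps)) //.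
  by rewrite le_max ha' orbT.
by rewrite le_max ha orbT.
Qed.

End Main.

Theorem lemma7p4 (R : realType) (d : nat) (s0 zeta kappa : R) :
  1 <= s0 -> zeta <= 0 -> 0 <= kappa <= 1 ->
  exists C : R, 0 < C /\
  forall K : nat -> R -> ('I_d -> int) -> R,
    (forall N, admissible s0 (epsN N) (K N)) ->
    of_order s0 zeta 1 K ->
    forall (N : nat) (t : R) (x1 x2 : 'I_d -> int),
      ((`|K N t x1 - K N t x2|)%:E <=
      (C * (gridnorm (epsN N) (fun i => x1 i - x2 i)) `^ kappa *
         ((Num.max (snorm s0 (epsN N) t x1) (epsN N)) `^ (zeta - kappa) +
          (Num.max (snorm s0 (epsN N) t x2) (epsN N)) `^ (zeta - kappa)))%:E
      * tnorm s0 (epsN N) zeta 1 (K N))%E.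
Proof.
move=> s01 z0 k01; exists (Cst d zeta kappa); split.
  exact: lt_le_trans ltr01 (Cst_ge1 _ _ _ _).
move=> K Hadm [M HM] N t x1 x2.
set eps := epsN N.
have e0 : 0 < eps by rewrite /eps /epsN invr_gt0 exprn_gt0 // ltr0n.
set TN := tnorm s0 eps zeta 1 (K N).
have Hub : forall k0 kx t' k, t' != 0 -> msize s0 k0 kx <= 1 ->
    ((`|Dk eps k0 kx (K N) t' k|
      / (Num.max (snorm s0 eps t' k) eps) `^ (Num.min (zeta - msize s0 k0 kx) 0))%:E
     <= TN)%E.
  move=> k0 kx t' k t0 hm; apply: ereal_sup_ubound.
  by exists k0, kx, t', k; split.
have TN0 : (0 <= TN)%E.
  apply: le_trans (Hub 0%N (fun _ => 0%N) 1 x1 (oner_neq0 _) _); last first.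
    by rewrite /msize big1 // mulr0 addr0 ler01.
  by rewrite lee_fin divr_ge0 // powR_ge0.
have TNf : TN = (fine TN)%:E.
  rewrite fineK // ge0_fin_numE //; exact: le_lt_trans (HM N) (ltey _).
set T := fine TN.
have T0 : 0 <= T by rewrite /T fine_ge0.
rewrite TNf -EFinM lee_fin.
have Cnn : forall A S : R, 0 <= A -> 0 <= S -> 0 <= Cst d zeta kappa * A * S * T.
  move=> A S A0 S0; rewrite !mulr_ge0 //; exact: le_trans ler01 (Cst_ge1 _ _ _ _).
have [d0|dpos] := posnP d.
  have -> : x2 = x1.
    by apply: boolp.funext => i; have := ltn_ord i; move: (nat_of_ord i); rewrite d0.
  rewrite subrr normr0; apply: Cnn; first exact: powR_ge0.
  by rewrite addr_ge0 // powR_ge0.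
have Hp : forall (x : 'I_d -> int) (t' : R), 0 < (Num.max (snorm s0 eps t' x) eps).
  by move=> x t'; apply: (lt_le_trans e0); rewrite le_max lexx orbT.
have ms0 : msize s0 0 (fun _ : 'I_d => 0%N) = 0.
  by rewrite /msize big1 // mulr0 addr0.
have ms1 : forall i : 'I_d, msize s0 0 (fun j => nat_of_bool (j == i)) = 1.
  move=> i; rewrite /msize mulr0 add0r (bigD1 i) //= eqxx big1 ?addr0 //.
  by move=> j /negPf ->.
have Hgen : forall t', t' != 0 -> `|K N t' x1 - K N t' x2| <=
    Cst d zeta kappa * gridnorm eps (fun i => x1 i - x2 i) `^ kappa *
    (rr d eps (`|t'| `^ s0^-1) x1 `^ (zeta - kappa) +
     rr d eps (`|t'| `^ s0^-1) x2 `^ (zeta - kappa)) * T.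
  move=> t' t0; apply: core => //.
  - move=> x; have := Hub 0%N (fun _ => 0%N) t' x t0.
    rewrite ms0 ler01 Dk0 subr0 (min_l z0) TNf lee_fin => /(_ isT).
    by rewrite ler_pdivrMr ?powR_gt0 // mulrC.
  - move=> x i; have := Hub 0%N (fun j => nat_of_bool (j == i)) t' x t0.
    rewrite ms1 lexx Dk1 TNf lee_fin => /(_ isT).
    rewrite (min_l (_ : zeta - 1 <= 0)); last by lra.
    have en : eps != 0 by rewrite gt_eqF.
    have ei : 0 <= eps^-1 by rewrite invr_ge0 ltW.
    rewrite ler_pdivrMr ?powR_gt0 // /Ddiff normrM (ger0_norm ei) => h.
    rewrite -[X in X <= _](mulVKf en) ler_wpM2l //; exact: ltW.
have [t0|tn] := eqVneq t 0; last exact: Hgen t tn.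
rewrite t0.
have s0p : 0 < s0 by exact: lt_le_trans ltr01 s01.
have Hs0 : s0^-1 != 0 by rewrite invr_eq0 gt_eqF.
have a0small : `|0:R| `^ s0^-1 <= eps by rewrite normr0 powR0 // ltW.
have es0 : 0 < eps `^ s0 by exact: powR_gt0.
have Hnear : forall t', t' != 0 -> `|t'| <= eps `^ s0 ->
    `|K N t' x1 - K N t' x2| <=
    Cst d zeta kappa * gridnorm eps (fun i => x1 i - x2 i) `^ kappa *
    (Num.max (snorm s0 eps 0 x1) eps `^ (zeta - kappa) +
     Num.max (snorm s0 eps 0 x2) eps `^ (zeta - kappa)) * T.
  move=> t' tn ts; have := Hgen t' tn.
  have small : `|t'| `^ s0^-1 <= eps.
    have si : 0 <= s0^-1 by rewrite invr_ge0 ltW.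
    have := powR_mono _ _ _ (normr_ge0 t') ts si.
    rewrite -powRrM mulfV ?gt_eqF // powRr1 //; exact: ltW.
  by rewrite /rr !(max_small _ _ _ _ _ small a0small).
have Hc : forall F : set_system R, Filter F ->
    (forall k, K N t k @[t --> F] --> K N 0 k) ->
    `|K N t x1 - K N t x2| @[t --> F] --> `|K N 0 x1 - K N 0 x2|.
  move=> F FF Hl; apply: cvg_norm; exact: (cvgB (Hl x1) (Hl x2)).
case: (Hadm N) => _ _ [Hl|Hl].
- apply: (@lim_le R 0^'+ _ (fun t => `|K N t x1 - K N t x2|)); first exact: Hc.
  near=> t'; apply: Hnear.
    by near: t'; exact: nbhs_right_neq.
  have tp : 0 < t' by near: t'; exact: nbhs_right_gt.
  rewrite gtr0_norm //; apply: ltW; near: t'; exact: nbhs_right_lt.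
- apply: (@lim_le R 0^'- _ (fun t => `|K N t x1 - K N t x2|)); first exact: Hc.
  near=> t'; apply: Hnear.
    by near: t'; exact: nbhs_left_neq.
  have tp : t' < 0 by near: t'; exact: nbhs_left_lt.
  rewrite ltr0_norm // lerNl; apply: ltW; near: t'; apply: nbhs_left_gt.
  by rewrite oppr_lt0.
Unshelve. all: by end_near.
Qed.
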